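(* Let $Q=[u_1,\dots,u_n]\subset\mathbb{S}^2$ with $n\ge 7$ be a spherical polygon not contained in any closed hemisphere, without self-intersections and antipodal intersections, with exactly two essential vertices $u_i,u_j$. Let $\tilde Q=Q-u_i-u_j$ and let $\overline{Q}=-Q$ be the antipodal polygon, with $\tilde{\overline Q}=\overline Q-\overline{u}_i-\overline{u}_j$. Then $\mathcal{H}_S(\tilde Q)\cap\mathcal{H}_S(\tilde{\overline Q})=\emptyset$.
   Context: A spherical polygon has edges the minimal great-circle arcs between consecutive vertices; no three vertices lie on a common great circle. A set is balanced if not contained in any closed hemisphere; for balanced $Q$, $u_i$ is essential if the vertex set minus $u_i$ is not balanced. Self-intersection: two non-adjacent edges intersect; antipodal intersection: non-adjacent edges $e,f$ with $e\cap(-f)\neq\emptyset$. $Q-u_i-u_j$ is the polygon obtained by deleting $u_i,u_j$ (with $u_i,u_j$ non-adjacent) and their edges and joining $u_{i-1}$ to $u_{i+1}$ and $u_{j-1}$ to $u_{j+1}$ by minimal arcs. $\mathcal{H}_S(X)$ denotes the spherical convex hull of a set $X$ contained in a closed hemisphere; $\overline u=-u$. *)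

(* Defs.v *)
From HB Require Import structures.
From mathcomp Require Import all_boot all_order all_algebra.
From mathcomp Require Import reals.
Set Implicit Arguments. Unset Strict Implicit. Unset Printing Implicit Defensive.
Import Order.TTheory GRing.Theory Num.Theory.
Local Open Scope ring_scope.

Section Spherical.
Variable R : realType.
Definition vec := 'rV[R]_3.

Definition dot (u v : vec) : R := (u *m v^T) 0 0.

Definition on_sphere (x : vec) : Prop := dot x x = 1.

(* the minimal great-circle arc between u and v (u, v non-antipodal):
   the points of S^2 in the cone spanned by u and v *)
Definition arc (u v : vec) : vec -> Prop :=
  fun w => on_sphere w /\ exists a b : R, 0 <= a /\ 0 <= b /\ w = a *: u + b *: v.

Definition in_closed_hemisphere (X : vec -> Prop) : Prop :=
  exists c : vec, c != 0 /\ forall x, X x -> 0 <= dot c x.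

Definition balanced (X : vec -> Prop) : Prop := ~ in_closed_hemisphere X.

Definition on_common_great_circle (a b c : vec) : Prop :=
  exists n : vec, n != 0 /\ dot n a = 0 /\ dot n b = 0 /\ dot n c = 0.

Variable n : nat.
Implicit Types (u : 'I_n -> vec) (i j k l : 'I_n).

Definition vertex_set u : vec -> Prop := fun x => exists k, x = u k.

Definition edge u k : vec -> Prop := arc (u k) (u (ordS k)).

Definition nonadjacent_edges k l : Prop :=
  k != l /\ ordS k != l /\ ordS l != k.

Definition spherical_polygon u : Prop :=
  (forall k, on_sphere (u k)) /\
  (forall a b c, a != b -> b != c -> a != c ->
     ~ on_common_great_circle (u a) (u b) (u c)).

Definition self_intersection u : Prop :=
  exists k l, nonadjacent_edges k l /\ exists x, edge u k x /\ edge u l x.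

Definition antipodal_intersection u : Prop :=
  exists k l, nonadjacent_edges k l /\ exists x, edge u k x /\ edge u l (- x).

Definition essential u i : Prop :=
  ~ balanced (fun x => exists k, k != i /\ x = u k).

Definition exactly_two_essential u i j : Prop :=
  i != j /\ essential u i /\ essential u j /\
  forall k, essential u k -> k = i \/ k = j.

Definition delete2 u i j : seq vec :=
  [seq u k | k <- enum 'I_n & (k != i) && (k != j)].

Definition antipodal_polygon u : 'I_n -> vec := fun k => - u k.

End Spherical.

Definition polygon_set (R : realType) (s : seq (vec R)) : vec R -> Prop :=
  fun x => exists k, (k < size s)%N /\
    arc (nth 0 s k) (nth 0 s ((k.+1) %% size s)) x.

Definition sph_hull (R : realType) (X : vec R -> Prop) : vec R -> Prop :=
  fun w => on_sphere w /\
    exists (m : nat) (p : 'I_m -> vec R) (lam : 'I_m -> R),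
      (forall k, X (p k)) /\ (forall k, 0 <= lam k) /\
      w = \sum_(k < m) lam k *: p k.

(* Main.v *)
Require Import Defs.
From Stdlib Require Import Classical.
From HB Require Import structures.
From mathcomp Require Import all_boot all_order all_algebra.
From mathcomp Require Import reals.
From mathcomp Require Import lra.
Import Order.TTheory GRing.Theory Num.Theory.
Local Open Scope ring_scope.

Section H.
Variable R : realType.
Implicit Types a b c v w : vec R.

Lemma dotE a b : dot a b = \sum_k a 0 k * b 0 k.
Proof. by rewrite /dot !mxE; apply: eq_bigr => k _; rewrite mxE. Qed.

Lemma dotC a b : dot a b = dot b a.
Proof. by rewrite !dotE; apply: eq_bigr => k _; rewrite mulrC. Qed.

Lemma dotDr c v w : dot c (v + w) = dot c v + dot c w.
Proof. by rewrite !dotE -big_split; apply: eq_bigr => k _; rewrite mxE mulrDr. Qed.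

Lemma dotZr c (r : R) v : dot c (r *: v) = r * dot c v.
Proof. by rewrite !dotE mulr_sumr; apply: eq_bigr => k _; rewrite mxE mulrCA. Qed.

Lemma dot0r c : dot c 0 = 0.
Proof. by rewrite dotE big1 // => k _; rewrite mxE mulr0. Qed.

Lemma dotNr c v : dot c (- v) = - dot c v.
Proof. by rewrite -scaleN1r dotZr mulN1r. Qed.

Lemma dot_sumr c m (F : 'I_m -> vec R) : dot c (\sum_(k < m) F k) = \sum_(k < m) dot c (F k).
Proof. exact: (big_morph (dot c) (dotDr c) (dot0r c)). Qed.

Lemma dot_self0 v : dot v v = 0 -> v = 0.
Proof.
rewrite dotE => /eqP; rewrite psumr_eq0; last by move=> k _; rewrite -expr2 sqr_ge0.
move=> /allP H; apply/matrixP => p q; rewrite ord1 mxE.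
have := H q (mem_index_enum q); rewrite mulf_eq0 orbb => /eqP; done.
Qed.

Lemma perp2 a b : exists w : vec R, w != 0 /\ dot w a = 0 /\ dot w b = 0.
Proof.
pose A : 'M[R]_(3,1+1) := row_mx a^T b^T.
have rk := mxrank_ker A.
have hA : (\rank A <= 2)%N := rank_leq_col A.
have nz : kermx A != 0.
  apply/eqP => E; move: rk; rewrite E mxrank0 => /eqP; rewrite eq_sym subn_eq0.
  by move=> H; have := leq_trans H hA.
have [k Hk] : exists k, row k (kermx A) != 0.
  case: (pickP (fun k => row k (kermx A) != 0)) => [k Hk | H]; first by exists k.
  exfalso; move/eqP: nz; apply; apply/row_matrixP => k.
  by rewrite row0; apply/eqP; move: (H k) => /= /negbFE.
exists (row k (kermx A)); split => //.
have : row k (kermx A) *m A = 0 by rewrite -row_mul mulmx_ker row0.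
rewrite /A mul_mx_row => /eqP; rewrite -row_mx0 => /eqP /eq_row_mx [E1 E2].
by rewrite /dot E1 E2 !mxE.
Qed.

Lemma dotDl a b c : dot (a + b) c = dot a c + dot b c.
Proof. by rewrite dotC dotDr !(dotC c). Qed.

Lemma dotNl a b : dot (- a) b = - dot a b.
Proof. by rewrite dotC dotNr dotC. Qed.

Lemma dot_ge0 v : 0 <= dot v v.
Proof. by rewrite dotE; apply: sumr_ge0 => k _; rewrite -expr2 sqr_ge0. Qed.

Lemma term_lem (a cs gs : R) : 0 <= a -> 0 <= cs -> (cs = 0 -> 0 < gs) ->
  a * cs = 0 -> 0 <= a * gs /\ (a * gs = 0 -> a = 0).
Proof.
move=> ha hc hg /eqP; rewrite mulf_eq0 => /orP [/eqP -> | /eqP hc0].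
  by rewrite mul0r.
have := hg hc0 => gp; split; first by rewrite mulr_ge0 // ltW.
by move/eqP; rewrite mulf_eq0 (gt_eqF gp) orbF => /eqP.
Qed.

Variable n : nat.
Variable u : 'I_n -> vec R.
Variables i j : 'I_n.

Definition Yp (y : vec R) := exists (a b : R) (s t : 'I_n),
  0 <= a /\ 0 <= b /\ s != i /\ t != i /\ y = a *: u s + b *: u t.

Definition Cone (y : vec R) := exists m (lam : 'I_m -> R) (p : 'I_m -> vec R),
  (forall k, Yp (p k)) /\ (forall k, 0 <= lam k) /\ y = \sum_(k < m) lam k *: p k.

Lemma nth_del (s : seq (vec R)) (f : 'I_n -> vec R) l :
  s = [seq f k | k <- enum 'I_n & (k != i) && (k != j)] ->
  (l < size s)%N -> exists k, k != i /\ nth 0 s l = f k.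
Proof.
move=> Es hl; have := mem_nth 0 hl; rewrite {2}Es => /mapP [k].
rewrite mem_filter => /andP [/andP [hi _] _] ->; by exists k.
Qed.

Lemma poly_Y p : polygon_set (delete2 u i j) p -> Yp p.
Proof.
move=> [l [hl [_ [a [b [ha [hb ->]]]]]]].
have h2 : (l.+1 %% size (delete2 u i j) < size (delete2 u i j))%N.
  by rewrite ltn_pmod //; apply: leq_ltn_trans hl.
have [k1 [h1 ->]] := nth_del _ _ _ (erefl _) hl.
have [k2 [h2' ->]] := nth_del _ _ _ (erefl _) h2.
by exists a, b, k1, k2.
Qed.

Lemma poly_Y' p : polygon_set (delete2 (antipodal_polygon u) i j) p -> Yp (- p).
Proof.
move=> [l [hl [_ [a [b [ha [hb ->]]]]]]].
have h2 : (l.+1 %% size (delete2 (antipodal_polygon u) i j) < size (delete2 (antipodal_polygon u) i j))%N.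
  by rewrite ltn_pmod //; apply: leq_ltn_trans hl.
have [k1 [h1 ->]] := nth_del _ _ _ (erefl _) hl.
have [k2 [h2' ->]] := nth_del _ _ _ (erefl _) h2.
exists a, b, k1, k2; do 4 split => //.
by rewrite /antipodal_polygon opprD !scalerN !opprK.
Qed.

Lemma hull_cone x : sph_hull (polygon_set (delete2 u i j)) x -> Cone x.
Proof.
move=> [_ [m [p [lam [hp [hl ->]]]]]]; exists m, lam, p; split => // k.
exact: poly_Y.
Qed.

Lemma hull_cone' x : sph_hull (polygon_set (delete2 (antipodal_polygon u) i j)) x -> Cone (- x).
Proof.
move=> [_ [m [p [lam [hp [hl ->]]]]]]; exists m, lam, (fun k => - p k); split.
  by move=> k; exact: poly_Y'.
split => //; rewrite -sumrN; apply: eq_bigr => k _; by rewrite scalerN.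
Qed.

Variables c g : vec R.
Hypothesis hc : forall k, k != i -> 0 <= dot c (u k).
Hypothesis hg : forall k, k != i -> dot c (u k) = 0 -> 0 < dot g (u k).

Lemma Y_key y : Yp y -> 0 <= dot c y /\ (dot c y = 0 -> 0 <= dot g y /\ (dot g y = 0 -> y = 0)).
Proof.
move=> [a [b [s [t [ha [hb [hs [ht ->]]]]]]]].
rewrite !dotDr !dotZr.
have t1 : 0 <= a * dot c (u s) by rewrite mulr_ge0 // hc.
have t2 : 0 <= b * dot c (u t) by rewrite mulr_ge0 // hc.
split; first by rewrite addr_ge0.
move/eqP; rewrite paddr_eq0 // => /andP [/eqP e1 /eqP e2].
have [g1 g1'] := term_lem _ _ _ ha (hc _ hs) (hg _ hs) e1.
have [g2 g2'] := term_lem _ _ _ hb (hc _ ht) (hg _ ht) e2.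
split; first by rewrite addr_ge0.
move/eqP; rewrite paddr_eq0 // => /andP [/eqP f1 /eqP f2].
by rewrite (g1' f1) (g2' f2) !scale0r addr0.
Qed.

Lemma Cone_key y : Cone y -> 0 <= dot c y /\ (dot c y = 0 -> 0 <= dot g y /\ (dot g y = 0 -> y = 0)).
Proof.
move=> [m [lam [p [hp [hl ->]]]]].
rewrite !dot_sumr.
have T1 : forall k, 0 <= dot c (lam k *: p k).
  by move=> k; rewrite dotZr mulr_ge0 //; case: (Y_key _ (hp k)).
split; first by apply: sumr_ge0.
move/eqP; rewrite psumr_eq0 // => /allP H1.
have Z1 : forall k, lam k = 0 \/ dot c (p k) = 0.
  move=> k; move: (H1 k (mem_index_enum k)); rewrite dotZr mulf_eq0.
  by case/orP => /eqP ->; [left|right].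
have T2 : forall k, 0 <= dot g (lam k *: p k).
  move=> k; rewrite dotZr; case: (Z1 k) => [->|e]; first by rewrite mul0r.
  by rewrite mulr_ge0 //; case: ((Y_key _ (hp k)).2 e).
split; first by apply: sumr_ge0.
move/eqP; rewrite psumr_eq0 // => /allP H2.
apply: big1 => k _.
move: (H2 k (mem_index_enum k)); rewrite dotZr mulf_eq0 => /orP [/eqP -> | /eqP e].
  by rewrite scale0r.
case: (Z1 k) => [->|e']; first by rewrite scale0r.
by rewrite ((Y_key _ (hp k)).2 e').2 // scaler0.
Qed.

End H.

Lemma third_idx n (s t : 'I_n) : (3 <= n)%N -> exists r : 'I_n, r != s /\ r != t.
Proof.
move=> hn.
have hA : (#|[set s; t]| <= 2)%N by rewrite cards2; case: (s != t).
have := cardsC [set s; t]; rewrite card_ord => E.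
have : (0 < #|~: [set s; t]|)%N.
  rewrite lt0n; apply/eqP => E0; rewrite E0 addn0 in E.
  by move: hA; rewrite E => h; have := leq_trans hn h.
case/card_gt0P => r; rewrite !inE negb_or => /andP [h1 h2]; by exists r.
Qed.

Lemma exists_g (R : realType) n (u : 'I_n -> vec R) i (c : vec R) :
  (3 <= n)%N -> spherical_polygon u -> c != 0 ->
  (forall k, k != i -> 0 <= dot c (u k)) ->
  exists g, forall k, k != i -> dot c (u k) = 0 -> 0 < dot g (u k).
Proof.
move=> hn [hsph hgp] cnz hc.
have gc : forall a b d, a != b -> b != d -> a != d ->
    dot c (u a) = 0 -> dot c (u b) = 0 -> dot c (u d) = 0 -> False.
  move=> a b d ab bd ad ca cb cd; apply: (hgp a b d ab bd ad).
  by exists c.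
case: (classic (exists s t, s != t /\ s != i /\ t != i /\ dot c (u s) = 0 /\ dot c (u t) = 0)).
  move=> [s [t [st [si [ti [cs ct]]]]]].
  exists (u s + u t).
  have us1 : dot (u s) (u s) = 1 := hsph s.
  have ut1 : dot (u t) (u t) = 1 := hsph t.
  have key : 0 < 1 + dot (u t) (u s).
    have h0 := dot_ge0 _ (u s + u t).
    have E : dot (u s + u t) (u s + u t) = (1 + dot (u t) (u s)) *+ 2.
      rewrite dotDl !dotDr us1 ut1 (dotC _ (u s) (u t)) mulr2n. lra.
    rewrite lt_neqAle; apply/andP; split; last first.
      move: h0; rewrite E mulr2n => h; lra.
    apply/eqP => E0; move: E; rewrite -E0 mul0rn => /dot_self0 /eqP.
    rewrite addr_eq0 => /eqP Ets.
    have [r [rs rt]] := third_idx _ s t hn.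
    have [w [wnz [ws wr]]] := perp2 _ (u s) (u r).
    apply: (hgp s t r st _ _); first by rewrite eq_sym.
      by rewrite eq_sym.
    exists w; split => //; split => //; split => //.
    by rewrite -(opprK (u t)) -Ets dotNr ws oppr0.
  move=> z zi cz.
  case: (eqVneq z s) => [->|zs]; first by rewrite dotDl us1.
  case: (eqVneq z t) => [->|zt]; first by rewrite dotDl ut1 dotC addrC.
  exfalso; apply: (gc s t z st _ _ cs ct cz); by rewrite eq_sym.
move=> H1.
case: (classic (exists s, s != i /\ dot c (u s) = 0)).
  move=> [s [si cs]]; exists (u s) => z zi cz.
  case: (eqVneq z s) => [->|zs]; first by rewrite (hsph s) ltr01.
  exfalso; apply: H1; exists s, z; split; [by rewrite eq_sym | by []].
move=> H2; exists 0 => z zi cz; exfalso; apply: H2; by exists z.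
Qed.

Theorem lemma12 (R : realType) (n : nat) (u : 'I_n -> vec R) (i j : 'I_n) :
  (7 <= n)%N ->
  spherical_polygon u ->
  balanced (vertex_set u) ->
  ~ self_intersection u ->
  ~ antipodal_intersection u ->
  exactly_two_essential u i j ->
  forall x : vec R,
    ~ (sph_hull (polygon_set (delete2 u i j)) x /\
       sph_hull (polygon_set (delete2 (antipodal_polygon u) i j)) x).
Proof.
move=> hn hsp _ _ _ [_ [ei _]] x [H1 H2].
have [c [cnz hcc]] : in_closed_hemisphere (fun x => exists k, k != i /\ x = u k).
  exact: NNPP.
have hc : forall k, k != i -> 0 <= dot c (u k).
  by move=> k hk; apply: hcc; exists k.
have hn3 : (3 <= n)%N by apply: leq_trans hn.
have [g hg] := exists_g _ _ _ _ _ hn3 hsp cnz hc.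
have C1 := hull_cone _ _ _ _ _ _ H1.
have C2 := hull_cone' _ _ _ _ _ _ H2.
have [a1 b1] := Cone_key _ _ _ _ _ _ hc hg _ C1.
have [a2 b2] := Cone_key _ _ _ _ _ _ hc hg _ C2.
rewrite dotNr oppr_ge0 in a2.
have e1 : dot c x = 0 by apply/le_anti; rewrite a1 a2.
have [a3 b3] := b1 e1.
have [a4 b4] : 0 <= dot g (- x) /\ (dot g (- x) = 0 -> - x = 0) by apply: b2; rewrite dotNr e1 oppr0.
rewrite dotNr oppr_ge0 in a4.
have e2 : dot g x = 0 by apply/le_anti; rewrite a3 a4.
have x0 := b3 e2.
case: H1 => hx _; move: hx; rewrite /on_sphere x0 dot0r => /eqP.
by rewrite eq_sym oner_eq0.
Qed.
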